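(* Let $(N,+,* )$ be a nilpotent ring and let $\circ$ be its adjoint operation $x\circ y=x+y+x*y$. Let $B,C$ be subgroups of $(N,\circ)$ such that every $x\in N$ can be written uniquely as $x=x_1\circ x_2$ with $x_1\in B$, $x_2\in C$, and define $x\bullet y=x_1\circ y\circ x_2$; then $(N,+,\bullet)$ is a left brace. Let $r(x,y)=(\sigma_x(y),\tau_y(x))$ be the Yang–Baxter map of $(N,+,\bullet)$ and let $X\subseteq N$ be such that $(X,r)$ is a solution of the set-theoretic Yang–Baxter equation. Let $f:X\to X$ be $\mathcal G(X,r)$-equivariant and let $g:X\to X$ satisfy $g(x)*c=c*g(x)$ for all $x\in X$, $c\in C$. Define $k_1(x)=f(x)*g(x)$ and $k_2(x)=f(x)+f(x)*g(x)$, and assume $k_1(X),k_2(X)\subseteq X$. For $i\in\{1,2\}$, if $f(x)*g(\tau_{k_i(y)}(x))=f(x)*g(\tau_y(x))$ for all $x,y\in X$, then $k_i$ is a reflection of $(X,r)$.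
   Context: A (left) brace is a triple $(B,+,\circ)$ with $(B,+)$ abelian group, $(B,\circ)$ group, and $x\circ(y+z)=x\circ y+x\circ z-x$. For a nilpotent (associative, not necessarily unital) ring, $(N,+,\circ)$ with the adjoint operation is a brace. The Yang–Baxter map of a brace $(N,+,\bullet)$ is $r(x,y)=(\sigma_x(y),\tau_y(x))$ with $\sigma_x(y)=x\bullet y-x$ and $\tau_y(x)=(\sigma_x(y))^{-1}\bullet x-(\sigma_x(y))^{-1}$, inverses taken in $(N,\bullet)$. For $X\subseteq N$, $(X,r)$ is a solution of the set-theoretic Yang–Baxter equation if $r(X\times X)\subseteq X\times X$ and $(\mathrm{id}\times r)(r\times\mathrm{id})(\mathrm{id}\times r)=(r\times\mathrm{id})(\mathrm{id}\times r)(r\times\mathrm{id})$ on $X^3$. A map $k:X\to X$ is a reflection of $(X,r)$ if $r(\mathrm{id}\times k)r(\mathrm{id}\times k)=(\mathrm{id}\times k)r(\mathrm{id}\times k)r$ as maps $X\times X\to X\times X$; $k$ is $\mathcal G(X,r)$-equivariant if $k\sigma_x=\sigma_x k$ on $X$ for every $x\in X$. *)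

(* Defs.v *)
(* the additive group of the ring is a zmodType;
   the (non-unital, associative) multiplication is an explicit operation. *)
From HB Require Import structures.
From mathcomp Require Import all_boot all_algebra.
From Stdlib Require Import ClassicalEpsilon.
Set Implicit Arguments. Unset Strict Implicit. Unset Printing Implicit Defensive.
Import GRing.Theory.
Local Open Scope ring_scope.

Section Defs.
Variable N : zmodType.
Variable mul : N -> N -> N.

Fixpoint mprod (x : N) (s : seq N) : N :=
  match s with [::] => x | y :: s' => mprod (mul x y) s' end.

(* the ring is nilpotent: N^(n+1) = 0 for some n *)
Definition nilpotent_mul : Prop :=
  exists n : nat, forall (x : N) (s : seq N), size s = n -> mprod x s = 0.

Definition adj (x y : N) : N := x + y + mul x y.

Definition is_subgroup (op : N -> N -> N) (e : N) (B : N -> Prop) : Prop :=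
  [/\ B e,
      (forall x y, B x -> B y -> B (op x y)) &
      (forall x, B x -> exists y, [/\ B y, op x y = e & op y x = e])].

Definition is_group (op : N -> N -> N) : Prop :=
  (forall x y z, op x (op y z) = op (op x y) z) /\
  exists e, (forall x, op e x = x /\ op x e = x) /\
            (forall x, exists y, op x y = e /\ op y x = e).

Definition is_left_brace (op : N -> N -> N) : Prop :=
  is_group op /\ forall x y z, op x (y + z) = op x y + op x z - x.

Variables B C : N -> Prop.

Definition dec (x : N) : N * N :=
  epsilon (inhabits (0, 0)) (fun p => [/\ B p.1, C p.2 & x = adj p.1 p.2]).

Definition bullet (x y : N) : N := adj (adj (dec x).1 y) (dec x).2.

End Defs.

Section YB.
Variable N : zmodType.
Variable op : N -> N -> N.

(* inverse in (N, op); the identity of a brace is 0 *)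
Definition binv (x : N) : N :=
  epsilon (inhabits 0) (fun y => op x y = 0 /\ op y x = 0).

Definition sigma (x y : N) : N := op x y - x.
Definition tau (y x : N) : N := op (binv (sigma x y)) x - binv (sigma x y).
Definition ybr (p : N * N) : N * N := (sigma p.1 p.2, tau p.2 p.1).

End YB.

Section Sol.
Variable T : Type.
Variable r : T * T -> T * T.

Definition r12 (t : T * T * T) : T * T * T :=
  let: (x, y, z) := t in let: (a, b) := r (x, y) in (a, b, z).
Definition r23 (t : T * T * T) : T * T * T :=
  let: (x, y, z) := t in let: (b, c) := r (y, z) in (x, b, c).
Definition idk (k : T -> T) (p : T * T) : T * T := (p.1, k p.2).

Variable X : T -> Prop.

Definition is_YB_solution : Prop :=
  (forall x y, X x -> X y -> X (r (x, y)).1 /\ X (r (x, y)).2) /\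
  (forall x y z, X x -> X y -> X z ->
     r23 (r12 (r23 (x, y, z))) = r12 (r23 (r12 (x, y, z)))).

Definition is_reflection (k : T -> T) : Prop :=
  forall x y, X x -> X y ->
    r (idk k (r (idk k (x, y)))) = idk k (r (idk k (r (x, y)))).

End Sol.

(* k is G(X,r)-equivariant: k sigma_x = sigma_x k on X for x in X *)
Definition equivariant (N : zmodType) (op : N -> N -> N) (X : N -> Prop)
  (k : N -> N) : Prop :=
  forall x y, X x -> X y -> k (sigma op x y) = sigma op x (k y).

(* Main.v *)
Require Import Defs.
From mathcomp Require Import all_boot all_algebra.
From Stdlib Require Import ClassicalEpsilon.
Import GRing.Theory.
Set Implicit Arguments. Unset Strict Implicit.
Local Open Scope ring_scope.

Section Brace.
Variable N : zmodType.
Variable op : N -> N -> N.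
Hypothesis opA : forall x y z, op x (op y z) = op (op x y) z.
Hypothesis op0x : forall x, op 0 x = x.
Hypothesis opx0 : forall x, op x 0 = x.
Hypothesis opinv : forall x, exists y, op x y = 0 /\ op y x = 0.
Hypothesis opD : forall x y z, op x (y + z) = op x y + op x z - x.

Lemma binvP x : op x (binv op x) = 0 /\ op (binv op x) x = 0.
Proof. rewrite /binv; exact: (epsilon_spec (inhabits 0) (fun y => op x y = 0 /\ op y x = 0) (opinv x)). Qed.

Lemma cancel_l a u v : op a u = op a v -> u = v.
Proof.
have [y [_ h]] := opinv a => e.
by rewrite -(op0x u) -(op0x v) -h -!opA e.
Qed.

Lemma op_opp s z : op s (- z) = s + s - op s z.
Proof.
have := opD s z (- z); rewrite subrr opx0 => e.
have -> : s + s = op s z + op s (-z) by rewrite {1}e subrK.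
by rewrite addrAC subrr add0r.
Qed.

Lemma op_sig a u : op a u = a + sigma op a u.
Proof. by rewrite /sigma addrC subrK. Qed.

Lemma sig_tau x y : sigma op (sigma op x y) (tau op y x) = x.
Proof.
rewrite /tau; set s := sigma op x y; set i := binv op s.
have [h1 h2] := binvP s.
rewrite /sigma opD op_opp opA -/i h1 op0x subr0.
by rewrite addrA addrK addrK.
Qed.

Lemma prod_r x y : op (sigma op x y) (tau op y x) = op x y.
Proof. by rewrite op_sig sig_tau addrC -op_sig. Qed.

Lemma tau_inv x y : tau op (tau op y x) (sigma op x y) = y.
Proof.
apply: (@cancel_l x).
have := prod_r (sigma op x y) (tau op y x).
by rewrite sig_tau prod_r.
Qed.

Lemma sig_inj a u v : sigma op a u = sigma op a v -> u = v.
Proof. by rewrite /sigma => /addIr; apply: cancel_l. Qed.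

Lemma refl_gen (X : N -> Prop) (k : N -> N)
  (H1 : forall x y, X x -> X y ->
     sigma op (sigma op x (k y)) (k (tau op (k y) x)) =
     sigma op (sigma op x y) (k (tau op y x)))
  (H2 : forall x y, X x -> X y ->
     sigma op (sigma op (sigma op x y) (k (tau op y x)))
              (k (tau op (k (tau op y x)) (sigma op x y))) = sigma op x (k y)) :
  is_reflection (ybr op) X k.
Proof.
move=> x y Xx Xy; rewrite /ybr /idk /=.
congr (_, _); first exact: H1.
apply: (@sig_inj (sigma op (sigma op x (k y)) (k (tau op (k y) x)))).
by rewrite sig_tau H1 // H2.
Qed.

End Brace.

Section Ring.
Variable N : zmodType.
Variable mul : N -> N -> N.
Hypothesis mulA : forall x y z, mul x (mul y z) = mul (mul x y) z.
Hypothesis mulDl : forall x y z, mul (x + y) z = mul x z + mul y z.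
Hypothesis mulDr : forall x y z, mul x (y + z) = mul x y + mul x z.

Lemma mulx0 x : mul x 0 = 0.
Proof. apply: (@addrI _ (mul x 0)); by rewrite -mulDr !addr0. Qed.
Lemma mul0x x : mul 0 x = 0.
Proof. apply: (@addrI _ (mul 0 x)); by rewrite -mulDl !addr0. Qed.
Lemma mulNx x y : mul (- x) y = - mul x y.
Proof. apply: (@addrI _ (mul x y)); by rewrite -mulDl !subrr mul0x. Qed.
Lemma mulxN x y : mul x (- y) = - mul x y.
Proof. apply: (@addrI _ (mul x y)); by rewrite -mulDr !subrr mulx0. Qed.

Lemma adjA x y z : adj mul x (adj mul y z) = adj mul (adj mul x y) z.
Proof.
rewrite /adj !mulDr !mulDl mulA !addrA.
by rewrite [LHS](ACl (1*2*5*3*6*4*7)).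
Qed.
Lemma adj0x x : adj mul 0 x = x.
Proof. by rewrite /adj mul0x add0r addr0. Qed.
Lemma adjx0 x : adj mul x 0 = x.
Proof. by rewrite /adj mulx0 !addr0. Qed.


Definition Lf (a1 a2 z : N) := z + mul a1 z + mul z a2 + mul (mul a1 z) a2.

Lemma adj_expand a1 a2 z : adj mul (adj mul a1 z) a2 = adj mul a1 a2 + Lf a1 a2 z.
Proof.
rewrite /adj /Lf !mulDl !addrA.
by rewrite [LHS](ACl (1*4*5*2*3*6*7)).
Qed.

Lemma LfD a1 a2 y z : Lf a1 a2 (y + z) = Lf a1 a2 y + Lf a1 a2 z.
Proof.
rewrite /Lf !mulDl !mulDr !mulDl !addrA.
by rewrite [LHS](ACl (1*3*5*7*2*4*6*8)).
Qed.

Lemma LfM a1 a2 w v : mul v a2 = mul a2 v -> Lf a1 a2 (mul w v) = mul (Lf a1 a2 w) v.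
Proof.
move=> hv; rewrite /Lf !mulDl.
have e1 : mul (mul w v) a2 = mul (mul w a2) v by rewrite -!mulA hv.
have e2 : mul (mul a1 (mul w v)) a2 = mul (mul (mul a1 w) a2) v.
  by rewrite mulA -!mulA hv.
by rewrite e1 e2 mulA.
Qed.

End Ring.

Section Main.
Variable N : zmodType.
Variable mul : N -> N -> N.
Hypothesis mulA : forall x y z, mul x (mul y z) = mul (mul x y) z.
Hypothesis mulDl : forall x y z, mul (x + y) z = mul x z + mul y z.
Hypothesis mulDr : forall x y z, mul x (y + z) = mul x y + mul x z.
Variables B C : N -> Prop.
Hypothesis HB : is_subgroup (adj mul) 0 B.
Hypothesis HC : is_subgroup (adj mul) 0 C.
Hypothesis Hfact : forall x : N, exists! p : N * N,
      [/\ B p.1, C p.2 & x = adj mul p.1 p.2].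

Notation adj := (adj mul).
Notation bul := (bullet mul B C).
Notation dec := (dec mul B C).

Lemma decP x : [/\ B (dec x).1, C (dec x).2 & x = adj (dec x).1 (dec x).2].
Proof.
have [p [hp _]] := Hfact x.
exact: (epsilon_spec (inhabits (0, 0)) (fun p => [/\ B p.1, C p.2 & x = adj p.1 p.2]) (ex_intro _ p hp)).
Qed.

Lemma dec_uniq x p : B p.1 -> C p.2 -> x = adj p.1 p.2 -> dec x = p.
Proof.
move=> h1 h2 h3; have [p0 [hp0 u]] := Hfact x.
case: (decP x) => d1 d2 d3.
by rewrite -(u _ (And3 d1 d2 d3)) (u p (And3 h1 h2 h3)).
Qed.

Lemma adj4 a b c d : adj (adj a (adj b c)) d = adj (adj a b) (adj c d).
Proof. by rewrite !(adjA mulA mulDl mulDr). Qed.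

Lemma dec_bul x y : dec (bul x y) = (adj (dec x).1 (dec y).1, adj (dec y).2 (dec x).2).
Proof.
case: HB => _ HBm _; case: HC => _ HCm _.
case: (decP x) => x1 x2 _; case: (decP y) => y1 y2 ey.
apply: dec_uniq => /=; [exact: HBm | exact: HCm |].
by rewrite /bullet {1}ey adj4.
Qed.

Lemma bulA x y z : bul x (bul y z) = bul (bul x y) z.
Proof.
rewrite [bul (bul x y) z]/bullet dec_bul /= /bullet.
by rewrite !(adjA mulA mulDl mulDr).
Qed.

Lemma dec0 : dec 0 = (0, 0).
Proof.
case: HB => B0 _ _; case: HC => C0 _ _.
by apply: dec_uniq => //=; rewrite (adj0x mulDl).
Qed.

Lemma bul0x x : bul 0 x = x.
Proof. by rewrite /bullet dec0 /= (adj0x mulDl) (adjx0 mulDr). Qed.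

Lemma bulx0 x : bul x 0 = x.
Proof. by rewrite /bullet (adjx0 mulDr); case: (decP x). Qed.

Lemma bulinv x : exists y, bul x y = 0 /\ bul y x = 0.
Proof.
case: HB => _ _ HBi; case: HC => _ _ HCi.
case: (decP x) => x1 x2 ex.
have [b' [b1 b2 b3]] := HBi _ x1.
have [c' [c1 c2 c3]] := HCi _ x2.
have dy : dec (adj b' c') = (b', c') by apply: dec_uniq.
exists (adj b' c'); split.
  by rewrite /bullet adj4 b2 (adj0x mulDl) c3.
by rewrite /bullet dy /= {1}ex adj4 b3 c2 (adj0x mulDl).
Qed.

Lemma sig_bul a z : sigma bul a z = Lf mul (dec a).1 (dec a).2 z.
Proof.
case: (decP a) => _ _ ea.
by rewrite /sigma /bullet (adj_expand mulDl) -ea addrC addKr.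
Qed.

Lemma bulD x y z : bul x (y + z) = bul x y + bul x z - x.
Proof.
case: (decP x) => _ _ ex.
rewrite /bullet !(adj_expand mulDl) (LfD mulDl mulDr) -ex.
set Ly := Lf _ _ _ y; set Lz := Lf _ _ _ z.
by rewrite [RHS]addrAC [x + Ly]addrC addrK addrCA.
Qed.

End Main.

Lemma refl_main (N : zmodType) (op : N -> N -> N)
  (opA : forall x y z, op x (op y z) = op (op x y) z)
  (op0x : forall x, op 0 x = x) (opx0 : forall x, op x 0 = x)
  (opinv : forall x, exists y, op x y = 0 /\ op y x = 0)
  (opD : forall x y z, op x (y + z) = op x y + op x z - x)
  (mul : N -> N -> N)
  (X : N -> Prop) (Hsol : is_YB_solution (ybr op) X) (f g : N -> N)
  (Hh : N -> N -> N) (k : N -> N) (kX : forall x, X x -> X (k x))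
  (Hk : forall a z, X a -> X z ->
      sigma op a (k z) = Hh (f (sigma op a z)) (mul (f (sigma op a z)) (g z)))
  (Hhyp : forall x y, X x -> X y ->
      mul (f x) (g (tau op (k y) x)) = mul (f x) (g (tau op y x))) :
  is_reflection (ybr op) X k.
Proof.
case: Hsol => Hcl _.
have sX : forall x y, X x -> X y -> X (sigma op x y).
  by move=> x y hx hy; exact: (Hcl x y hx hy).1.
have tX : forall x y, X x -> X y -> X (tau op y x).
  by move=> x y hx hy; exact: (Hcl x y hx hy).2.
have sT := sig_tau opA op0x opx0 opinv opD.
have tI := tau_inv opA op0x opx0 opinv opD.
apply: (refl_gen opA op0x opx0 opinv opD (X:=X) (k:=k)) => x y hx hy.
  rewrite (Hk (sigma op x (k y)) (tau op (k y) x)) ?(Hk (sigma op x y) (tau op y x));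
    try by repeat first [assumption | apply: kX | apply: tX | apply: sX].
  by rewrite !sT Hhyp.
set a := sigma op x y; set b := tau op y x.
have ha : X a by apply: sX.
have hb : X b by apply: tX.
rewrite (Hk (sigma op a (k b)) (tau op (k b) a)) ?(Hk x y);
  try by repeat first [assumption | apply: kX | apply: tX | apply: sX].
by rewrite !sT Hhyp // tI.
Qed.

Theorem mainTheorem6 (N : zmodType) (mul : N -> N -> N)
  (mulA : forall x y z, mul x (mul y z) = mul (mul x y) z)
  (mulDl : forall x y z, mul (x + y) z = mul x z + mul y z)
  (mulDr : forall x y z, mul x (y + z) = mul x y + mul x z)
  (nilN : nilpotent_mul mul)
  (B C : N -> Prop)
  (HB : is_subgroup (adj mul) 0 B) (HC : is_subgroup (adj mul) 0 C)
  (Hfact : forall x : N, exists! p : N * N,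
      [/\ B p.1, C p.2 & x = adj mul p.1 p.2])
  (X : N -> Prop)
  (Hsol : is_YB_solution (ybr (bullet mul B C)) X)
  (f g : N -> N)
  (fX : forall x, X x -> X (f x)) (gX : forall x, X x -> X (g x))
  (Hf : equivariant (bullet mul B C) X f)
  (Hg : forall x c, X x -> C c -> mul (g x) c = mul c (g x))
  (k1X : forall x, X x -> X (mul (f x) (g x)))
  (k2X : forall x, X x -> X (f x + mul (f x) (g x))) :
  is_left_brace (bullet mul B C) /\
  ((forall x y, X x -> X y ->
      mul (f x) (g (tau (bullet mul B C) (mul (f y) (g y)) x))
      = mul (f x) (g (tau (bullet mul B C) y x))) ->
    is_reflection (ybr (bullet mul B C)) X (fun x => mul (f x) (g x))) /\
  ((forall x y, X x -> X y ->
      mul (f x) (g (tau (bullet mul B C) (f y + mul (f y) (g y)) x))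
      = mul (f x) (g (tau (bullet mul B C) y x))) ->
    is_reflection (ybr (bullet mul B C)) X (fun x => f x + mul (f x) (g x))).
Proof.
have bA := bulA mulA mulDl mulDr HB HC Hfact.
have b0x := bul0x mulDl mulDr HB HC Hfact.
have bx0 := bulx0 mulDr Hfact.
have bI := bulinv mulA mulDl mulDr HB HC Hfact.
have bD := bulD mulDl mulDr Hfact.
have sB := sig_bul mulDl Hfact.
have semi : forall a z, X z -> sigma (bullet mul B C) a (mul (f z) (g z))
     = mul (sigma (bullet mul B C) a (f z)) (g z).
  move=> a z hz; rewrite !sB (LfM mulA mulDl) //.
  by case: (decP Hfact a) => _ hc _; rewrite Hg.
split; first by split=> //; split=> //; exists 0.
split=> Hyp.
  apply: (refl_main bA b0x bx0 bI bD (mul := mul) Hsol (f := f) (g := g) (Hh := fun _ p => p)) => //.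
  by move=> a z ha hz; rewrite semi // (Hf a z).
apply: (refl_main bA b0x bx0 bI bD (mul := mul) Hsol (f := f) (g := g) (Hh := fun w p => w + p)) => //.
by move=> a z ha hz; rewrite sB (LfD mulDl mulDr) -!sB semi // (Hf a z).
Qed.
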